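(* Let $\mathbf{C}=\mathbf{C}_1\,\dot\cup\,\mathbf{C}_2$, $\mathbf{B}\in\dot{\mathbb{P}}(\mathbb{L}(\mathbf{C}_1))$ with $|\mathbf{B}|=|\mathbf{C}_1|$, and let $\mathbf{C}'$ be a finite set of binary causes with $\mathbf{C}'\cap\mathbf{C}=\varnothing$ such that potential outcomes $D_{\mathbf{C}=\mathbf{c},\mathbf{C}'=\mathbf{c}'}(\omega)$ are defined. Suppose every $X'\in\mathbf{C}'$ is not causally influenced by $\mathbf{C}$, and the relativized consistency axiom $D_{\mathbf{C}=\mathbf{c},\mathbf{C}'=\mathbf{C}'(\omega)}(\omega)=D_{\mathbf{C}=\mathbf{c}}(\omega)$ holds for all $\omega,\mathbf{c}$. If $\mathbf{B}$ is irreducible for $\mathcal{D}(\mathbf{C},\Omega)$, then $\mathbf{B}$ is irreducible for $\mathcal{D}(\mathbf{C}\cup\mathbf{C}',\Omega)$.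
   Context: An event is a binary random variable on a population $\Omega$; $\overline{X}=1-X$; $\mathbb{L}(\mathbf{C})=\mathbf{C}\cup\{\overline{X}:X\in\mathbf{C}\}$; $\dot{\mathbb{P}}(\mathbb{L}(\mathbf{C}))$ is the set of subsets of $\mathbb{L}(\mathbf{C})$ not containing both $X$ and $\overline{X}$ for any $X$; $(L)_{\mathbf{c}}$ is the value of literal $L$ under assignment $\mathbf{c}$; $\bigwedge(\mathbf{B})=\min_{L\in\mathbf{B}}L$. For a set of causes $\mathbf{C}$, potential outcomes $\mathcal{D}(\mathbf{C},\Omega)$ are values $D_{\mathbf{c}}(\omega)\in\{0,1\}$ for all $\omega\in\Omega$ and assignments $\mathbf{c}$ to $\mathbf{C}$; $\mathbf{C}'(\omega)$ denotes the actual values of $\mathbf{C}'$ for $\omega$. A variable $X'$ is not causally influenced by $\mathbf{C}$ if for every $\omega$ its potential outcomes $X'_{\mathbf{C}=\mathbf{c}}(\omega)$ do not depend on $\mathbf{c}$. A sufficient cause representation $(\mathbf{A},\mathfrak{B})$ for $\mathcal{D}(\mathbf{C},\Omega)$ is a tuple $\mathbf{A}=\langle A_1,\dots,A_p\rangle$ of binary random variables on $\Omega$ unaffected by interventions on $\mathbf{C}$ and a tuple $\mathfrak{B}=\langle\mathbf{B}_1,\dots,\mathbf{B}_p\rangle$, $\mathbf{B}_i\in\dot{\mathbb{P}}(\mathbb{L}(\mathbf{C}))$, with: for all $\omega,\mathbf{c}$, $D_{\mathbf{c}}(\omega)=1$ iff some $j$ has $A_j(\omega)=1$ and $(\bigwedge(\mathbf{B}_j))_{\mathbf{c}}=1$.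 $\mathbf{B}\in\dot{\mathbb{P}}(\mathbb{L}(\mathbf{C}))$ is irreducible for $\mathcal{D}(\mathbf{C},\Omega)$ if in every such representation some $\mathbf{B}_i\in\mathfrak{B}$ satisfies $\mathbf{B}\subseteq\mathbf{B}_i$ (and analogously with $\mathbf{C}\cup\mathbf{C}'$ in place of $\mathbf{C}$). *)

(* Defs.v *)
From mathcomp Require Import all_boot.
Set Implicit Arguments. Unset Strict Implicit. Unset Printing Implicit Defensive.

(* A finite set of binary causes is modelled by a finite type T of cause
   names.  A literal over T is a pair (x, b) : T * bool, where (x, true)
   stands for the event X and (x, false) for its complement 1 - X.
   L(T) is therefore T * bool, and a set of literals is a {set T * bool}. *)

Definition literal (T : finType) := (T * bool)%type.

Definition lit_val (T : finType) (l : literal T) (c : {ffun T -> bool}) : bool :=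
  if l.2 then c l.1 else ~~ c l.1.

Definition conj_val (T : finType) (B : {set literal T}) (c : {ffun T -> bool}) : bool :=
  [forall l in B, lit_val l c].

(* B is in Pdot(L(T)): it never contains both X and its complement *)
Definition consistent_lits (T : finType) (B : {set literal T}) : bool :=
  [forall x : T, ~~ (((x, true) \in B) && ((x, false) \in B))].

(* The A_j are binary random
   variables on Omega that are unaffected by interventions on the causes,
   i.e. functions of omega alone (they do not take the intervention c). *)
Definition sc_representation (T : finType) (Omega : Type)
  (D : {ffun T -> bool} -> Omega -> bool)
  (p : nat) (A : 'I_p -> Omega -> bool) (Bs : 'I_p -> {set literal T}) : Prop :=
  (forall j, consistent_lits (Bs j)) /\
  (forall (w : Omega) (c : {ffun T -> bool}),
      D c w = [exists j : 'I_p, A j w && conj_val (Bs j) c]).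

Definition irreducible (T : finType) (Omega : Type)
  (D : {ffun T -> bool} -> Omega -> bool) (B : {set literal T}) : Prop :=
  forall (p : nat) (A : 'I_p -> Omega -> bool) (Bs : 'I_p -> {set literal T}),
    sc_representation D A Bs -> exists i : 'I_p, B \subset Bs i.

(* Joint assignment to C u C' (causes indexed by the sum type TC + TC'). *)
Definition join_assign (TC TC' : finType) (c : {ffun TC -> bool})
  (c' : {ffun TC' -> bool}) : {ffun (TC + TC')%type -> bool} :=
  [ffun x => match x with inl a => c a | inr b => c' b end].

Definition lift_lits (TC TC' : finType) (B : {set literal TC})
  : {set literal (TC + TC')%type} :=
  [set ((inl l.1 : (TC + TC')%type), l.2) | l in B].

(* Main.v *)
Require Import Defs.
From mathcomp Require Import all_boot.

Definition projL {TC TC' : finType} (S : {set literal (TC + TC')%type}) : {set literal TC} :=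
  [set l | ((inl l.1 : (TC + TC')%type), l.2) \in S].
Definition projR {TC TC' : finType} (S : {set literal (TC + TC')%type}) : {set literal TC'} :=
  [set l | ((inr l.1 : (TC + TC')%type), l.2) \in S].

Lemma conj_join {TC TC' : finType} (S : {set literal (TC + TC')%type}) c c' :
  conj_val S (join_assign c c') = conj_val (projL S) c && conj_val (projR S) c'.
Proof.
apply/forallP/andP.
- move=> H; split; apply/forallP => -[x b]; apply/implyP; rewrite inE /= => Hin.
  + by have := H (inl x, b); rewrite Hin /= /lit_val /= ffunE.
  + by have := H (inr x, b); rewrite Hin /= /lit_val /= ffunE.
- case => /forallP H1 /forallP H2 [[x|x] b]; apply/implyP => Hin.
  + by have := H1 (x, b); rewrite inE /= Hin /= /lit_val /= ffunE.
  + by have := H2 (x, b); rewrite inE /= Hin /= /lit_val /= ffunE.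
Qed.

Lemma projL_cons {TC TC' : finType} (S : {set literal (TC + TC')%type}) :
  consistent_lits S -> consistent_lits (projL S).
Proof.
move=> /forallP H; apply/forallP => x; rewrite !inE /=; exact: (H (inl x)).
Qed.

Theorem mainTheorem5
  (TC TC' : finType) (Omega : Type)
  (C1 C2 : {set TC})
  (hC12disj : C1 :&: C2 = set0) (hC12cov : C1 :|: C2 = setT)
  (B : {set literal TC})
  (hBcons : consistent_lits B)
  (hBC1 : forall l, l \in B -> l.1 \in C1)
  (hBcard : #|B| = #|C1|)
  (D1 : {ffun TC -> bool} -> Omega -> bool)
  (D2 : {ffun (TC + TC')%type -> bool} -> Omega -> bool)
  (Cp : Omega -> {ffun TC' -> bool})
  (Cp_po : {ffun TC -> bool} -> Omega -> {ffun TC' -> bool})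
  (hnoinfl : forall (c1 c2 : {ffun TC -> bool}) (w : Omega),
      Cp_po c1 w = Cp_po c2 w)
  (hcons : forall (w : Omega) (c : {ffun TC -> bool}),
      D2 (join_assign c (Cp w)) w = D1 c w) :
  irreducible D1 B -> irreducible D2 (lift_lits TC' B).
Proof.
move=> Hirr p A Bs [Hc Hrep].
have Hr : sc_representation D1 (fun j w => A j w && conj_val (projR (Bs j)) (Cp w))
  (fun j => projL (Bs j)).
  split; first by move=> j; apply: projL_cons.
  move=> w c; rewrite -hcons Hrep; apply: eq_existsb => j.
  by rewrite conj_join; case: (A j w); case: (conj_val _ _); case: (conj_val _ _).
have [i Hsub] := Hirr _ _ _ Hr.
exists i; apply/subsetP => l /imsetP [[x b] Hl0 ->].
by move/subsetP: Hsub => /(_ _ Hl0); rewrite inE.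
Qed.
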